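(* Let $S_1$ and $S_2$ be path strings containing no symbolic links that refer to the same file on the file system, where $S_2$ is canonical and $S_1$ may or may not be canonical. Run the main loop of sanitize on $S_1$. Then at every iteration $i$ of the loop, one of the following holds: (1) the string representation of the stack is a prefix of $S_2$; or (2) if a directory token pushed onto the stack made the string representation of the stack cease to be a prefix of $S_2$, then this directory token is eventually popped off the stack by a subsequent ''..'' token.
   Context: Path strings are strings over valid filename characters together with ''.'' and ''/''. Tokenization splits a path string on every maximal run of consecutive ''/'' characters, discarding empty pieces. A path string is canonical if it is ''/'' or of the form ''/$a_1$/$a_2$/.../$a_n$'' with $n\ge1$, where each $a_j$ is a nonempty filename containing no ''/'' and different from ''.'' and ''..''. The main loop of sanitize on a path string $U$: start with an empty stack and process the tokens of $U$ from left to right; if the token is ''..'', pop the top of the stack if the stack is nonempty (otherwise do nothing); if the token is ''.'', do nothing; otherwise push the token. The string representation of a stack with contents $t_1,\dots,t_m$ (bottom to top) is ''/'' if $m=0$ and ''/$t_1$/$t_2$/.../$t_m$'' if $m\ge1$. A string $A$ is a prefix of a string $B$ if $|A|\le|B|$ and $A[j]=B[j]$ for every position $j$ of $A$ (character-wise prefix). Path strings are interpreted in a hierarchical (tree-shaped) file system rooted at ''/'', with no symbolic links: starting at the root, a filename token moves to the child of that name, ''.'' stays in the current directory, and ''..'' moves to the parent directory (the parent of the root being the root). Two path strings refer to the same file if this resolution leads to the same file. *)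

(* Defs.v *)
From mathcomp Require Import all_boot.
Set Implicit Arguments. Unset Strict Implicit. Unset Printing Implicit Defensive.

Section Paths.
Variables (C : eqType) (sl dt : C).

Definition dot_tok : seq C := [:: dt].
Definition dotdot_tok : seq C := [:: dt; dt].

Fixpoint split_slash (s : seq C) : seq (seq C) :=
  match s with
  | [::] => [:: [::]]
  | c :: s' =>
      let r := split_slash s' in
      if c == sl then [::] :: r
      else match r with
           | [::] => [:: [:: c]]
           | w :: r' => (c :: w) :: r'
           end
  end.

(* Tokenization: split on maximal runs of "/" and discard empty pieces
   (equivalently: split on every "/" and discard empty pieces). *)
Definition tokens (s : seq C) : seq (seq C) :=
  filter (fun w => w != [::]) (split_slash s).

(* A stack is a list of tokens, bottom first, top last. *)
Definition pop (st : seq (seq C)) : seq (seq C) := take (size st).-1 st.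

Definition sanitize_step (st : seq (seq C)) (t : seq C) : seq (seq C) :=
  if t == dotdot_tok then pop st
  else if t == dot_tok then st
  else rcons st t.

Definition run (toks : seq (seq C)) : seq (seq C) :=
  foldl sanitize_step [::] toks.

Definition stack_repr (st : seq (seq C)) : seq C :=
  if st is [::] then [:: sl] else flatten (map (fun t => sl :: t) st).

Definition good_name (a : seq C) : bool :=
  [&& a != [::], sl \notin a, a != dot_tok & a != dotdot_tok].

Definition canonical (s : seq C) : Prop :=
  exists names : seq (seq C), all good_name names /\ s = stack_repr names.

(* A node is
   identified by the sequence of names on the path from the root; the file
   system is the (prefix-closed, root-containing) set of existing nodes. *)
Definition is_tree (fs : pred (seq (seq C))) : Prop :=
  fs [::] /\ forall (p : seq (seq C)) (a : seq C), fs (rcons p a) -> fs p.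

(* resolution of one token; None = resolution fails (no such file) *)
Definition resolve_step (fs : pred (seq (seq C))) (o : option (seq (seq C)))
    (t : seq C) : option (seq (seq C)) :=
  match o with
  | None => None
  | Some cur =>
      if t == dot_tok then Some cur
      else if t == dotdot_tok then Some (take (size cur).-1 cur) (* parent; parent of root is root *)
      else if fs (rcons cur t) then Some (rcons cur t) else None
  end.

Definition resolve (fs : pred (seq (seq C))) (s : seq C) : option (seq (seq C)) :=
  foldl (resolve_step fs) (Some [::]) (tokens s).

Definition same_file (fs : pred (seq (seq C))) (s1 s2 : seq C) : Prop :=
  exists f, resolve fs s1 = Some f /\ resolve fs s2 = Some f.

End Paths.

(* Main.v *)
Require Import Defs.
From mathcomp Require Import all_boot.
From mathcomp Require Import zify.
Set Implicit Arguments. Unset Strict Implicit. Unset Printing Implicit Defensive.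

Section H.
Variables (C : eqType) (sl dt : C).

Lemma split_ne s : split_slash sl s != [::].
Proof. elim: s => //= c s IH; case: ifP => // _; by case: (split_slash sl s). Qed.

Lemma split_cat t s : sl \notin t ->
  split_slash sl (t ++ s) = (t ++ head [::] (split_slash sl s)) :: behead (split_slash sl s).
Proof.
elim: t => [|c t IH] /=.
  by move=> _; case: (split_slash sl s) (split_ne s).
rewrite inE negb_or => /andP[ne nt]; rewrite IH // eq_sym (negbTE ne) //.
Qed.

Lemma split_repr names : all (fun a => sl \notin a) names ->
  split_slash sl (flatten (map (fun t => sl :: t) names)) = [::] :: names.
Proof.
elim: names => [|a n IH] //= /andP[na nn].
rewrite eqxx split_cat // IH //= cats0 //.
Qed.

Lemma tokens_canon names : all (good_name sl dt) names ->
  tokens sl (stack_repr sl names) = names.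
Proof.
move=> H; case: names H => [|a n] H; first by rewrite /tokens /= eqxx.
rewrite /tokens /stack_repr split_repr /=.
  move: H => /= /andP[/and4P[-> _ _ _] H]; congr cons; apply/all_filterP.
  by apply: sub_all H => x /and4P[].
by apply: sub_all H => x /and4P[].
Qed.

Lemma foldl_None fs s : foldl (resolve_step dt fs) None s = None.
Proof. by elim: s. Qed.

Lemma res_good fs toks p f : all (good_name sl dt) toks ->
  foldl (resolve_step dt fs) (Some p) toks = Some f -> f = p ++ toks.
Proof.
elim: toks p => [|t s IH] p /=; first by move=> _ [->]; rewrite cats0.
case/andP=> /and4P[_ _ nd ndd] al.
rewrite (negbTE nd) (negbTE ndd); case: ifP => _; last by rewrite foldl_None.
by move/IH => ->//; rewrite cat_rcons.
Qed.

Lemma res_run fs toks p f :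
  foldl (resolve_step dt fs) (Some p) toks = Some f -> foldl (sanitize_step dt) p toks = f.
Proof.
elim: toks p => [|t s IH] p /=; first by case.
rewrite {2}/sanitize_step.
case: ifP => hd.
  move/eqP: hd => ->; rewrite (_ : (dot_tok dt == dotdot_tok dt) = false); first by move/IH.
  by apply/eqP => -[].
case: ifP => hdd; first by move/IH.
by case: ifP => _; [move/IH | rewrite foldl_None].
Qed.

Lemma step_take m s t : m <= size s -> m <= size (sanitize_step dt s t) ->
  take m (sanitize_step dt s t) = take m s.
Proof.
rewrite /sanitize_step /pop; case: ifP => _.
  by move=> _ h; rewrite take_takel // -(size_takel (leq_pred (size s))).
case: ifP => _ // h _; by rewrite -cats1 takel_cat.
Qed.

Lemma step_size s t : (size s).-1 <= size (sanitize_step dt s t).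
Proof.
rewrite /sanitize_step /pop; case: ifP => _; first by rewrite size_takel // leq_pred.
case: ifP => _; first exact: leq_pred.
by rewrite size_rcons (leq_trans (leq_pred _)) .
Qed.

Lemma step_lt s t : size (sanitize_step dt s t) < size s -> t = dotdot_tok dt.
Proof.
rewrite /sanitize_step; case: ifP => [/eqP//|_].
by case: ifP => _; rewrite ?ltnn // size_rcons ltnNge leqnSn.
Qed.

Lemma repr_take S2 st M : prefix [:: sl] S2 -> prefix (stack_repr sl st) S2 ->
  prefix (stack_repr sl (take M st)) S2.
Proof.
move=> h0 h; have [E|NE] := eqVneq (take M st) [::]; first by rewrite E.
apply: prefix_trans h; case: st NE => [|b st] // NE.
rewrite /stack_repr; case E: (take M (b :: st)) NE => [|a r] // _.
rewrite -E -{2}(cat_take_drop M (b :: st)) map_cat flatten_cat.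
exact: prefix_prefix.
Qed.

End H.

Theorem lemma3 (C : eqType) (sl dt : C) (Hsd : sl != dt)
    (fs : pred (seq (seq C))) (Htree : is_tree fs)
    (S1 S2 : seq C) (Hsame : same_file sl dt fs S1 S2)
    (Hcan : canonical sl dt S2) :
  let toks := tokens sl S1 in
  let st := fun k => run dt (take k toks) in
  forall i, 1 <= i <= size toks ->
    prefix (stack_repr sl (st i)) S2
    \/ exists j,
        [/\ 1 <= j <= i,
            nth [::] toks j.-1 != dot_tok dt /\ nth [::] toks j.-1 != dotdot_tok dt,
            prefix (stack_repr sl (st j.-1)) S2 /\ ~~ prefix (stack_repr sl (st j)) S2,
            (forall l, j <= l <= i -> size (st j) <= size (st l))
          & exists k,
              [/\ i < k <= size toks,
                  nth [::] toks k.-1 = dotdot_tok dt,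
                  (forall l, j <= l < k -> size (st j) <= size (st l))
                & size (st k) < size (st j)]].
Proof.
move=> toks st i /andP[i1 iN].
have [names [Hgood HS2]] := Hcan.
have h0 : prefix [:: sl] S2.
  by rewrite HS2 /stack_repr; case: (names) => [|a n] /=; rewrite eqxx ?prefix0s.
have Hn : st (size toks) = names.
  case: Hsame => f [H1 H2]; move: H2; rewrite /resolve HS2 (tokens_canon Hgood).
  move/(res_good (sl:=sl)) => /(_ Hgood) /= Hf.
  by rewrite /st take_size /run -Hf; apply: res_run H1.
have Hstep : forall l, l < size toks -> st l.+1 = sanitize_step dt (st l) (nth [::] toks l).
  by move=> l hl; rewrite /st /run (take_nth [::] hl) foldl_rcons.
have Hpn : forall M, prefix (stack_repr sl (take M names)) S2.
  by move=> M; apply: repr_take => //; rewrite HS2 prefix_refl.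
case: (boolP (prefix (stack_repr sl (st i)) S2)) => Hpi; [by left | right].
pose P := fun l => (l <= i) && prefix (stack_repr sl (st l)) S2.
have exP : exists l, P l by exists 0; rewrite /P leq0n /st take0.
have ubP : forall l, P l -> l <= i by move=> l /andP[].
case: (ex_maxnP exP ubP) => p /andP[Hpi' Hpp] maxp.
have pi : p < i.
  by rewrite ltn_neqAle Hpi' andbT; apply: contraNneq Hpi => <-.
have pn : p < size toks by apply: leq_trans iN.
have notP : forall l, p < l <= i -> ~~ prefix (stack_repr sl (st l)) S2.
  move=> l /andP[pl li]; apply/negP => hl.
  by have := maxp l; rewrite /P li hl => /(_ isT); rewrite leqNgt pl.
set t := nth [::] toks p.
have Hj := Hstep p pn.
have Hnj : ~~ prefix (stack_repr sl (st p.+1)) S2 by apply: notP; rewrite ltnSn pi.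
have [tnd tndd] : t != dot_tok dt /\ t != dotdot_tok dt.
  move: Hnj; rewrite Hj /sanitize_step.
  case: ifP => [_ | hdd]; first by rewrite /pop repr_take.
  case: ifP => [_ | hd]; first by rewrite Hpp.
  by move=> _; split; apply/negbT.
have Hjr : st p.+1 = rcons (st p) t
  by rewrite Hj /sanitize_step (negbTE tndd) (negbTE tnd).
set M := size (st p.+1).
have HM : M = (size (st p)).+1 by rewrite /M Hjr size_rcons.
have INV : forall d, p.+1 + d <= size toks ->
    (forall l, p.+1 <= l <= p.+1 + d -> M <= size (st l)) ->
    take M (st (p.+1 + d)) = st p.+1.
  elim => [|d IH] hd hs; first by rewrite addn0 /M take_size.
  rewrite addnS in hd hs *.
  rewrite Hstep // step_take.
  - apply: IH; first exact: ltnW.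
    by move=> l /andP[a b]; apply: hs; rewrite a (leq_trans b).
  - by apply: hs; rewrite leq_addr leqnSn.
  - by rewrite -Hstep //; apply: hs; rewrite leqnn andbT -addnS leq_addr.
have DROP : forall l, p.+1 <= l -> l < size toks ->
    (forall l', p.+1 <= l' <= l -> M <= size (st l')) ->
    size (st l.+1) < M -> st l.+1 = st p.
  move=> l pl ln hs hlt.
  have := INV (l - p.+1); rewrite subnKC // => /(_ (ltnW ln)) /(_ hs) Ht.
  have Ml : M <= size (st l) by apply: hs; rewrite pl leqnn.
  have ss := step_size dt (st l) (nth [::] toks l); rewrite -Hstep // in ss.
  have sz : size (st l.+1) = M.-1 by lia.
  rewrite -(@take_oversize _ M.-1 (st l.+1)) ?sz //.
  rewrite Hstep // step_take -?Hstep ?sz //; last by lia.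
  rewrite -(take_takel _ (leq_pred M)) Ht HM Hjr /= -cats1 take_size_cat //.
have HI : forall l, p.+1 <= l <= i -> M <= size (st l).
  have aux : forall d, p.+1 + d <= i -> forall l, p.+1 <= l <= p.+1 + d -> M <= size (st l).
    elim => [|d IH] hd l /andP[a b].
      by rewrite addn0 in b; rewrite (@anti_leq l p.+1) ?a ?b.
    rewrite addnS in hd b.
    have IH' := IH (ltnW hd).
    case: (leqP l (p.+1 + d)) => hl; first by apply: IH'; rewrite a hl.
    have el : l = (p.+1 + d).+1 by apply/eqP; rewrite eqn_leq b hl.
    case: (leqP M (size (st l))) => // hlt.
    have := DROP (p.+1 + d) (leq_addr _ _) (leq_trans hd iN) IH'.
    rewrite -el => /(_ hlt) E.
    by have := notP l; rewrite E Hpp a el hd => /(_ isT).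
  move=> l /andP[a b]; apply: (aux (i - p.+1)); first by rewrite subnKC.
  by rewrite a subnKC.
pose Q := fun k => (i < k <= size toks) && (size (st k) < M).
have exQ : exists k, Q k.
  case: (boolP (has (fun k => size (st k) < M) (iota i.+1 (size toks - i)))) => [/hasP [k]|/hasPn hno].
    by rewrite mem_iota => /andP[a b] c; exists k; rewrite /Q a c; lia.
  exfalso.
  have all_ge : forall l, p.+1 <= l <= p.+1 + (size toks - p.+1) -> M <= size (st l).
    move=> l /andP[a b]; case: (leqP l i) => li; first by apply: HI; rewrite a li.
    rewrite leqNgt; apply: hno; rewrite mem_iota li /=; lia.
  have := INV _ _ all_ge; rewrite subnKC // Hn => /(_ (leqnn _)) E.
  by move: Hnj; rewrite -E Hpn.
case: (ex_minnP exQ) => k /andP[/andP[ik kn] kM] mink.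
have Hge : forall l, p.+1 <= l < k -> M <= size (st l).
  move=> l /andP[a b]; case: (leqP l i) => li; first by apply: HI; rewrite a li.
  case: (leqP M (size (st l))) => // c.
  have := mink l; rewrite /Q li c (leq_trans (ltnW b) kn) => /(_ isT).
  by rewrite leqNgt b.
exists p.+1; split.
- by rewrite pi.
- by [].
- by [].
- exact: HI.
have k0 : k = (k.-1).+1 by lia.
exists k; split => //; first by rewrite ik kn.
apply: (step_lt (s:=st k.-1)).
rewrite -Hstep -?k0; last by lia.
apply: (leq_trans kM); apply: Hge; lia.
Qed.
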